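(* For every $n\ge1$, \[S_{1,0}(2n)=0,\qquad S_{1,0}(2n-1)=\frac{B_{2n}}{n},\qquad S_{2,0}(2n)=-\frac{B_{2n}}{2n}.\]
   Context: $B_m$ denotes the $m$-th Bernoulli number ($B_2=\tfrac16$, $B_4=-\tfrac1{30}$, ...). Let $a_0,a_1,\dots$ be indeterminates and $a(x)=\sum_{i\ge0}a_ix^i$. For a positive integer $j$ set $G(x)=\prod_{i=0}^{j-1}\frac{1+a(x)x^2}{1+ix}$, $H(x)=\prod_{i=1-j}^{-1}\frac{1+ix}{1+a(x)x^2}$, $u=2j-1$, $v=j(j-1)$. For each $n\ge1$ there are unique polynomials $S_0(n),\dots,S_n(n)\in\mathbb{Q}[a_0,\dots,a_{n-2}]$, independent of $j$, such that for every positive integer $j$ the coefficient of $x^{n-1}$ in $\frac{G(x)-H(x)}{x^2}(1+a(x)x^2)$ equals $u\big(a_{n-1}+S_0(n)+\sum_{i=1}^nS_i(n)v^i\big)$. For $1\le i\le n$, $S_{i,0}(n)\in\mathbb{Q}$ denotes the constant term of $S_i(n)$. *)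

(* Defs.v *)
From HB Require Import structures.
From mathcomp Require Import all_boot all_order all_algebra.
From mathcomp Require Import mpoly.
Set Implicit Arguments. Unset Strict Implicit. Unset Printing Implicit Defensive.
Import Order.TTheory GRing.Theory Num.Theory.
Local Open Scope ring_scope.

(* Bernoulli numbers, convention B_0 = 1, B_1 = -1/2, B_2 = 1/6, B_4 = -1/30:
   B_m = - 1/(m+1) * \sum_{k<m} C(m+1,k) B_k  for m >= 1. *)
Fixpoint bern_upto (m : nat) : seq rat :=
  match m with
  | 0 => [:: 1]
  | m'.+1 =>
      let s := bern_upto m' in
      rcons s (- (\sum_(k < m'.+1) ('C(m'.+2, k))%:R * nth 0 s k) / (m'.+2)%:R)
  end.

Definition bernoulli (m : nat) : rat := nth 0 (bern_upto m) m.

(* Inverse of a formal power series p with p`_0 = 1, modulo x^(N+1):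
   1/p = 1/(1 - (1-p)) = \sum_k (1-p)^k, and (1-p)^k = O(x^k). *)
Definition trunc_inv (R : comNzRingType) (N : nat) (p : {poly R}) : {poly R} :=
  \sum_(k < N.+1) (1 - p) ^+ k.

Section Setup.
(* n >= 1 is the index; the ring of coefficients is Q[a_0, ..., a_{n-1}],
   realised as {mpoly rat[n.-1.+1]} (= n variables when n >= 1), with
   a_i = 'X_i, so that a_{n-1} = 'X_ord_max. *)
Variable n : nat.
Local Notation Rn := {mpoly rat[n.-1.+1]}.

(* a(x) = \sum_i a_i x^i; only a_0..a_{n-1} can influence the coefficient of
   x^(n+1) of (G-H)(1+a(x)x^2) (a_i x^(i+2) has degree >= n+2 for i >= n). *)
Definition aser : {poly Rn} := \sum_(i < n.-1.+1) ('X_i)%:P * 'X^i.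

(* truncation order: enough to get all coefficients up to x^(n+1) exactly *)
Local Notation N := n.+1.

Definition Gser (j : nat) : {poly Rn} :=
  \prod_(i < j) ((1 + aser * 'X^2) * trunc_inv N (1 + (i%:R : Rn) *: 'X)).

(* H(x) = \prod_{i=1-j}^{-1} (1 + i x) / (1 + a(x) x^2); writing i = -k,
   k = 1..j-1  (mod x^(N+1)) *)
Definition Hser (j : nat) : {poly Rn} :=
  \prod_(1 <= k < j) ((1 - (k%:R : Rn) *: 'X) * trunc_inv N (1 + aser * 'X^2)).

(* coefficient of x^(n-1) in (G(x)-H(x))/x^2 * (1 + a(x) x^2), i.e. the
   coefficient of x^(n+1) in (G(x)-H(x)) * (1 + a(x) x^2). *)
Definition lhs_coef (j : nat) : Rn :=
  ((Gser j - Hser j) * (1 + aser * 'X^2))`_n.+1.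

(* S : i |-> S_i(n) in Q[a_0, ..., a_{n-2}] = {mpoly rat[n.-1]}, embedded into
   Q[a_0, ..., a_{n-1}] by mwiden. *)
Definition S_spec (S : nat -> {mpoly rat[n.-1]}) : Prop :=
  forall j : nat, (0 < j)%N ->
    lhs_coef j =
      ((j.*2.-1)%:R : Rn) *
        ('X_ord_max + mwiden (S 0%N)
         + \sum_(1 <= i < n.+1) mwiden (S i) * ((j * j.-1)%:R : Rn) ^+ i).

End Setup.

Definition const_term (m : nat) (p : {mpoly rat[m]}) : rat := p@_0%MM.

(* Main.v *)
Require Import Defs.
From HB Require Import structures.
From mathcomp Require Import all_boot all_order all_algebra.
From mathcomp Require Import mpoly.
From mathcomp Require Import ring lra zify.
From Stdlib Require Import ClassicalEpsilon.
Set Implicit Arguments. Unset Strict Implicit. Unset Printing Implicit Defensive.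
Import Order.TTheory GRing.Theory Num.Theory.
Local Open Scope ring_scope.

Lemma poly_eq_from (k : nat) (p q : {poly rat}) :
  (forall j : nat, (k <= j)%N -> p.[j%:R] = q.[j%:R]) -> p = q.
Proof.
move=> H; apply/eqP; rewrite -subr_eq0; apply/negP => /negP nz.
pose rs := [seq (i + k)%:R | i <- iota 0 (size (p - q))] : seq rat.
have H1 : all (root (p - q)) rs.
  apply/allP => x /mapP [i _ ->]; rewrite /root hornerD hornerN H ?subrr //.
  by rewrite leq_addl.
have H2 : uniq rs.
  rewrite map_inj_uniq ?iota_uniq //.
  by move=> a b /eqP; rewrite eqr_nat eqn_add2r => /eqP.
by have := max_poly_roots nz H1 H2; rewrite size_map size_iota ltnn.
Qed.

Definition AD (r : {poly rat}) : Prop :=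
  exists a : {poly rat}, forall j : nat, a.[j%:R] = \sum_(i < j) r.[i%:R].

Lemma AD0 : AD 0.
Proof. by exists 0 => j; rewrite horner0 big1 // => i _; rewrite horner0. Qed.

Lemma ADD p q : AD p -> AD q -> AD (p + q).
Proof.
move=> [a Ha] [b Hb]; exists (a + b) => j.
by rewrite hornerD Ha Hb -big_split /=; apply: eq_bigr => i _; rewrite hornerD.
Qed.

Lemma ADZ c p : AD p -> AD (c *: p).
Proof.
move=> [a Ha]; exists (c *: a) => j.
by rewrite hornerZ Ha mulr_sumr; apply: eq_bigr => i _; rewrite hornerZ.
Qed.

Lemma ADsum (I : Type) (r : seq I) (F : I -> {poly rat}) :
  (forall i, AD (F i)) -> AD (\sum_(i <- r) F i).
Proof.
move=> H; elim: r => [|x r IH]; first by rewrite big_nil; exact: AD0.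
by rewrite big_cons; apply: ADD.
Qed.

Lemma tele (k : nat) (j : nat) :
  \sum_(i < j) ((i%:R + 1) ^+ k - (i%:R) ^+ k) = (j%:R : rat) ^+ k - (0 : rat) ^+ k.
Proof.
elim: j => [|j IH]; first by rewrite big_ord0 subrr.
rewrite big_ord_recr /= IH -natr1; ring.
Qed.

Lemma AD_T k : AD (('X + 1) ^+ k - 'X^k).
Proof.
exists ('X^k - ((0:rat) ^+ k)%:P) => j; rewrite hornerD hornerN hornerC hornerXn -(tele k j).
by apply: eq_bigr => i _; rewrite !hornerE.
Qed.

Lemma AD_Xn k : AD 'X^k.
Proof.
elim/ltn_ind: k => k IH.
have E : 'X^k = (k.+1%:R)^-1 *: ((('X + 1) ^+ k.+1 - 'X^(k.+1))
     - \sum_(l < k) ('C(k.+1, l)%:R *: 'X^l)) :> {poly rat}.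
  rewrite exprD1n big_ord_recr /= binn mulr1n addrK big_ord_recr /= binSn.
  rewrite (eq_bigr (fun l : 'I_k => 'C(k.+1, l)%:R *: 'X^l)); last first.
    by move=> l _; rewrite scaler_nat.
  rewrite addrAC subrr add0r -scaler_nat scalerA mulVf ?scale1r //.
  by rewrite pnatr_eq0.
rewrite E; apply: ADZ; apply: ADD; first exact: AD_T.
rewrite -scaleN1r; apply: ADZ; apply: ADsum => l; apply: ADZ; apply: IH.
exact: ltn_ord.
Qed.

Definition fa k : {poly rat} :=
  proj1_sig (constructive_indefinite_description _ (AD_Xn k)).

Lemma faE k (j : nat) : (fa k).[j%:R] = \sum_(i < j) (i%:R) ^+ k.
Proof.
rewrite /fa; case: constructive_indefinite_description => a /= Ha.
by rewrite Ha; apply: eq_bigr => i _; rewrite hornerXn.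
Qed.

Lemma fa_shift k : fa k \Po ('X + 1) - fa k = 'X^k.
Proof.
apply: (@poly_eq_from 0) => j _.
rewrite hornerD hornerN horner_comp !hornerE natr1 !faE.
by rewrite big_ord_recr /= addrAC subrr add0r.
Qed.

Lemma fa0 k : (fa k)`_0 = 0.
Proof. by rewrite -horner_coef0 -[0 : rat]/(0%:R) faE big_ord0. Qed.

Definition bb k := (fa k)`_1.

Lemma bb0 : bb 0 = 1.
Proof.
rewrite /bb; have -> : fa 0 = 'X.
  apply: (@poly_eq_from 0) => j _; rewrite faE hornerX.
  by rewrite (eq_bigr (fun _ => 1)) ?sumr_const ?card_ord // => i _; rewrite expr0.
by rewrite /bb coefX.
Qed.

Lemma bb_rec m : (0 < m)%N -> \sum_(i < m.+1) 'C(m.+1, i)%:R * bb i = 0.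
Proof.
move=> m0.
have -> : \sum_(i < m.+1) 'C(m.+1, i)%:R * bb i
   = (\sum_(i < m.+1) 'C(m.+1, i)%:R *: fa i)`_1.
  by rewrite coef_sum; apply: eq_bigr => i _; rewrite coefZ.
have -> : \sum_(i < m.+1) 'C(m.+1, i)%:R *: fa i = 'X^(m.+1).
  apply: (@poly_eq_from 0) => j _; rewrite hornerXn horner_sum.
  rewrite (eq_bigr (fun i : 'I_m.+1 => \sum_(l < j) 'C(m.+1, i)%:R * (l%:R)^+i)); last first.
    by move=> i _; rewrite hornerZ faE mulr_sumr.
  rewrite exchange_big /=.
  have T := tele m.+1 j; rewrite expr0n /= subr0 in T; rewrite -T.
  apply: eq_bigr => l _; rewrite exprD1n [in RHS]big_ord_recr /= binn mulr1n addrK.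
  by apply: eq_bigr => i _; rewrite mulr_natl.
by rewrite coefXn; case: m m0.
Qed.

Lemma bern_upto_size m : size (bern_upto m) = m.+1.
Proof. by elim: m => [|m IH] //=; rewrite size_rcons IH. Qed.

Lemma bern_upto_nth m k : (k <= m)%N -> nth 0 (bern_upto m) k = bernoulli k.
Proof.
elim: m => [|m IH]; first by rewrite leqn0 => /eqP ->.
rewrite leq_eqVlt => /orP [/eqP -> //| lt]; rewrite /= nth_rcons bern_upto_size lt.
exact: IH.
Qed.

Lemma bernoulliS m : bernoulli m.+1 =
  - (\sum_(k < m.+1) 'C(m.+2, k)%:R * bernoulli k) / m.+2%:R.
Proof.
rewrite {1}/bernoulli /= nth_rcons bern_upto_size ltnn eqxx.
congr (- _ / _); apply: eq_bigr => k _; rewrite bern_upto_nth //.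
by rewrite -ltnS.
Qed.

Lemma bbE k : bb k = bernoulli k.
Proof.
elim/ltn_ind: k => [[|m]] IH; first by rewrite bb0.
rewrite bernoulliS.
have := bb_rec (ltn0Sn m); rewrite big_ord_recr /= binSn => E.
have -> : \sum_(k < m.+1) 'C(m.+2, k)%:R * bernoulli k
     = \sum_(k < m.+1) 'C(m.+2, k)%:R * bb k.
  by apply: eq_bigr => k _; rewrite IH // ltnS ltnW.
move/eqP: E; rewrite addr_eq0 => /eqP ->.
by rewrite opprK mulrC mulKf // pnatr_eq0.
Qed.

Lemma fa_shiftx k (x : rat) : (fa k).[x + 1] - (fa k).[x] = x ^+ k.
Proof.
have := congr1 (fun p => p.[x]) (fa_shift k).
by rewrite /= hornerD hornerN horner_comp !hornerE.
Qed.

Lemma bb_odd k : (1 < k)%N -> odd k -> bb k = 0.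
Proof.
move=> k1 ok.
set a := fa k.
have sgn : (-1) ^+ k = -1 :> rat by rewrite -signr_odd ok expr1.
pose R := a \Po (1 - 'X).
have HR : forall x : rat, R.[x] = a.[1 - x].
  by move=> x; rewrite /R horner_comp !hornerE.
pose D := R - a.
have HDx : forall x : rat, D.[x + 1] = D.[x].
  move=> x; rewrite /D !hornerD !hornerN !HR.
  have h1 := fa_shiftx k (- x); have h2 := fa_shiftx k x.
  rewrite exprNn sgn -/a in h1; rewrite -/a in h2.
  have -> : 1 - (x + 1) = - x by ring.
  have e1 : a.[1 - x] = a.[- x] - x ^+ k.
    have -> : 1 - x = - x + 1 by rewrite addrC.
    by rewrite -[a.[- x + 1]](subrK a.[- x]) h1; ring.
  have e2 : a.[x + 1] = a.[x] + x ^+ k.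
    by rewrite -[a.[x + 1]](subrK a.[x]) h2; ring.
  rewrite e1 e2; ring.
have HD : forall j : nat, D.[j%:R] = D.[0].
  by elim=> [|j IH] //; rewrite -natr1 HDx.
have DC : D = (D.[0])%:P.
  by apply: (@poly_eq_from 0) => j _; rewrite hornerC HD.
have R1 : R`_1 = bb k.
  have : D`_1 = 0 by rewrite DC coefC.
  by rewrite /D coefB => /eqP; rewrite subr_eq0 => /eqP.
have a1 : (a^`()).[1] = bb k.
  have := congr1 (fun p => (p^`()).[0]) (fa_shift k).
  rewrite /= derivB deriv_comp derivD derivX derivC addr0 mulr1 derivXn.
  rewrite hornerD hornerN horner_comp hornerMn hornerXn !hornerE expr0n.
  have -> : (k.-1 == 0%N) = false by move: k1; case: (k) => [|[|kk]].
  rewrite mul0rn => /eqP; rewrite subr_eq0 => /eqP ->.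
  by rewrite horner_coef0 coef_deriv mulr1n.
have R1' : R`_1 = - bb k.
  have : (R^`()).[0] = R`_1 by rewrite horner_coef0 coef_deriv.
  rewrite /R deriv_comp derivB derivX derivC sub0r mulrN1 hornerN horner_comp.
  by rewrite !hornerE a1 => <-.
have : bb k + bb k = 0 by rewrite -{1}R1 R1' addNr.
by rewrite -mulr2n -mulr_natr => /eqP; rewrite mulf_eq0 pnatr_eq0 orbF => /eqP.
Qed.

Section Newton.
Variable Nt : nat.

Definition eqm (p q : {poly rat}) := forall m, (m <= Nt)%N -> p`_m = q`_m.

Lemma eqm_mull r p q : eqm p q -> eqm (r * p) (r * q).
Proof.
move=> H m hm; rewrite !coefM; apply: eq_bigr => i _; rewrite H //.
exact: leq_trans (leq_subr _ _) hm.
Qed.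

Lemma eqm_mulr r p q : eqm p q -> eqm (p * r) (q * r).
Proof. by move=> H; rewrite ![_ * r]mulrC; apply: eqm_mull. Qed.

Lemma eqm_add p q p' q' : eqm p q -> eqm p' q' -> eqm (p + p') (q + q').
Proof. by move=> H H' m hm; rewrite !coefD H ?H'. Qed.

Lemma prod_newton (r : seq nat) (F U : nat -> {poly rat}) :
  (forall i, eqm ('X * (F i)^`()) (U i * F i)) ->
  eqm ('X * (\prod_(i <- r) F i)^`()) ((\sum_(i <- r) U i) * \prod_(i <- r) F i).
Proof.
move=> HF; elim: r => [|x r IH].
  by rewrite !big_nil derivC mulr0 mul0r.
rewrite !big_cons derivM mulrDr.
have -> : (U x + \sum_(j <- r) U j) * (F x * \prod_(j <- r) F j)
   = (U x * F x) * \prod_(j <- r) F j + F x * ((\sum_(j <- r) U j) * \prod_(j <- r) F j).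
  by ring.
apply: eqm_add.
  by rewrite mulrA; apply: eqm_mulr.
by rewrite mulrCA; apply: eqm_mull.
Qed.

Definition TG (i : nat) : {poly rat} := \poly_(k < Nt.+1) ((- i%:R) ^+ k).
Definition UG (i : nat) : {poly rat} :=
  \poly_(k < Nt.+1) (if k == 0%N then 0 else (- i%:R) ^+ k).

Lemma TG_E i : trunc_inv Nt (1 + (i%:R : rat) *: 'X) = TG i.
Proof.
rewrite /trunc_inv /TG poly_def; apply: eq_bigr => k _.
by rewrite opprD addrA subrr add0r -scaleNr exprZn.
Qed.

Lemma newton_G i : eqm ('X * (TG i)^`()) (UG i * TG i).
Proof.
move=> m hm; rewrite coefXM coefM.
case: m hm => [|m] hm /=.
  by rewrite big_ord1 /UG coef_poly /= mul0r.
rewrite coef_deriv /TG coef_poly ltnS hm big_ord_recl /UG coef_poly /= mul0r add0r.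
rewrite (eq_bigr (fun _ => (- i%:R) ^+ m.+1)); last first.
  move=> a _; rewrite !coef_poly /bump /= add1n.
  have ha : (a.+1 < Nt.+1)%N by rewrite ltnS (leq_trans _ hm) // ltnS ltn_ord.
  rewrite ha ltnS (leq_trans (leq_subr _ _) (ltnW hm)).
  by rewrite -exprD subnKC // ltn_ord.
by rewrite sumr_const card_ord -mulr_natl mulr_natl.
Qed.

Definition UH (k : nat) : {poly rat} :=
  \poly_(a < Nt.+1) (if a == 0%N then 0 else - (k%:R) ^+ a).

Lemma newton_H k : eqm ('X * (1 - (k%:R : rat) *: 'X)^`()) (UH k * (1 - k%:R *: 'X)).
Proof.
move=> m hm.
rewrite derivB derivC derivZ derivX sub0r mulrN -scalerAr mulr1 coefN coefZ coefX.
rewrite mulrBr mulr1 -scalerAr coefB coefZ coefMX /UH !coef_poly.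
case: m hm => [|[|m]] hm /=; first by rewrite mulr0 !subrr.
  by rewrite ltnS hm; ring.
rewrite mulr0 ltnS hm ltnS (ltnW hm) exprS mulrN; ring.
Qed.

End Newton.

Section Lift.
Variables (Nt : nat) (g : nat -> nat -> rat) (c : nat -> rat).
Definition Sg (a : nat) : {poly rat} := if a == 0%N then 0 else c a *: fa a.
Hypothesis H0 : forall j, g 0 j = 1.
Hypothesis Hg0 : forall m, g m 0 = (m == 0%N)%:R.
Hypothesis HN : forall j m, (0 < m)%N -> (m <= Nt)%N ->
  g m j *+ m = \sum_(a < m.+1) (Sg a).[j%:R] * g (m - a)%N j.

Lemma lift : exists P : nat -> {poly rat},
  forall m, (m <= Nt)%N -> forall j : nat, (P m).[j%:R] = g m j.
Proof.
suff : forall M, exists P : nat -> {poly rat},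
  forall m, (m <= M)%N -> (m <= Nt)%N -> forall j : nat, (P m).[j%:R] = g m j.
  by case/(_ Nt) => P HP; exists P => m hm; apply: HP.
elim=> [|M [P HP]].
  by exists (fun _ => 1) => m; rewrite leqn0 => /eqP -> _ j; rewrite hornerC H0.
pose p := (M.+1%:R)^-1 *: \sum_(a < M.+2) Sg a * P (M.+1 - a)%N.
exists (fun i => if i == M.+1 then p else P i) => m hm hmN j.
case: eqP => [em|nem]; last first.
  by apply: HP => //; move: hm; rewrite leq_eqVlt ltnS => /orP [/eqP//|].
subst m; rewrite /p hornerZ horner_sum.
apply: (@mulfI _ (M.+1%:R)); first by rewrite pnatr_eq0.
rewrite mulrA mulfV ?pnatr_eq0 // mul1r mulr_natl HN //.
apply: eq_bigr => a _; rewrite hornerM.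
case: (posnP a) => [->|a0]; first by rewrite /Sg eqxx horner0 !mul0r.
rewrite HP // ?(leq_trans (leq_subr _ _) hmN) //; lia.
Qed.

Variable P : nat -> {poly rat}.
Hypothesis HP : forall m, (m <= Nt)%N -> forall j : nat, (P m).[j%:R] = g m j.

Lemma lift_newton m : (0 < m)%N -> (m <= Nt)%N ->
  P m *+ m = \sum_(a < m.+1) Sg a * P (m - a)%N.
Proof.
move=> m0 mN; apply: (@poly_eq_from 0) => j _.
rewrite hornerMn HP // HN // horner_sum; apply: eq_bigr => a _.
by rewrite hornerM HP // (leq_trans (leq_subr _ _) mN).
Qed.

Lemma P_coef0 m : (m <= Nt)%N -> (P m)`_0 = (m == 0%N)%:R.
Proof. by move=> mN; rewrite -horner_coef0 -[0 : rat]/(0%:R) HP. Qed.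

Lemma P0 : (0 <= Nt)%N -> P 0 = 1.
Proof. by move=> _; apply: (@poly_eq_from 0) => j _; rewrite HP // hornerC H0. Qed.

Lemma Sg_coef0 a : (Sg a)`_0 = 0.
Proof. by rewrite /Sg; case: eqP => _; rewrite ?coef0 // coefZ fa0 mulr0. Qed.

Lemma P_coef1 m : (0 < m)%N -> (m <= Nt)%N -> (P m)`_1 *+ m = c m * bb m.
Proof.
move=> m0 mN; rewrite -coefMn lift_newton // coef_sum big_ord_recr /=.
rewrite subnn coefM big_ord_recr big_ord1 /= Sg_coef0 mul0r add0r P_coef0 //.
rewrite /Sg eqn0Ngt m0 /= coefZ mulr1.
rewrite big1 ?add0r // => [[a ha]] _ /=.
rewrite coefM big_ord_recr big_ord1 /= Sg_coef0 mul0r add0r P_coef0.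
  by rewrite subn_eq0 leqNgt ha mulr0.
exact: leq_trans (leq_subr _ _) mN.
Qed.

Lemma P_coef2 m : (0 < m)%N -> (m <= Nt)%N -> (P m)`_2 *+ m =
  \sum_(a < m) (if nat_of_ord a == 0%N then 0 else c a * bb a * (P (m - a)%N)`_1)
  + c m * (fa m)`_2.
Proof.
move=> m0 mN; rewrite -coefMn lift_newton // coef_sum big_ord_recr /=.
rewrite subnn P0 // coefM !big_ord_recr big_ord0 /= Sg_coef0 mul0r add0r.
rewrite coefC /= mulr0 add0r coefC /= mulr1.
rewrite /Sg eqn0Ngt m0 /= coefZ; congr (_ + _).
apply: eq_bigr => [[a ha]] _ /=.
rewrite coefM !big_ord_recr big_ord0 /= Sg_coef0 mul0r add0r.
rewrite P_coef0 ?(leq_trans (leq_subr _ _) mN) // subn_eq0 leqNgt ha mulr0 addr0.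
by rewrite /Sg; case: eqP => _; rewrite ?coef0 ?mul0r // coefZ.
Qed.

End Lift.

Section GH.
Variable Nt : nat.

Definition gG m j := (\prod_(i < j) TG Nt i)`_m.
Definition gH m j := (\prod_(1 <= k < j) (1 - (k%:R : rat) *: 'X))`_m.
Definition cG (a : nat) : rat := (-1) ^+ a.
Definition cH (a : nat) : rat := -1.

Lemma coefXD (p : {poly rat}) m : (0 < m)%N -> ('X * p^`())`_m = p`_m *+ m.
Proof. by case: m => // m _; rewrite coefXM coef_deriv. Qed.

Lemma sum_pow_shift (a j : nat) : (0 < a)%N ->
  \sum_(1 <= k < j) (k%:R : rat) ^+ a = \sum_(i < j) (i%:R) ^+ a.
Proof.
move=> a0; case: j => [|j]; first by rewrite big_geq // big_ord0.
rewrite -(big_mkord xpredT (fun i => (i%:R : rat) ^+ a)) big_ltn //.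
by rewrite expr0n eqn0Ngt a0 add0r.
Qed.

Lemma gG_H0 j : gG 0 j = 1.
Proof.
rewrite /gG coef0_prod big1 // => i _.
by rewrite /TG coef_poly expr0.
Qed.

Lemma gG_Hg0 m : gG m 0 = (m == 0%N)%:R.
Proof. by rewrite /gG big_ord0 coef1. Qed.

Lemma gG_HN j m : (0 < m)%N -> (m <= Nt)%N ->
  gG m j *+ m = \sum_(a < m.+1) (Sg cG a).[j%:R] * gG (m - a)%N j.
Proof.
move=> m0 mN.
have := prod_newton (index_iota 0 j) (@newton_G Nt) mN.
rewrite big_mkord coefXD // /gG => ->; rewrite coefM; apply: eq_bigr => a _.
congr (_ * _); rewrite coef_sum /Sg.
have aN : (a < Nt.+1)%N by rewrite ltnS (leq_trans _ mN) // -ltnS.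
case: eqP => [a0|a0].
  by rewrite horner0 big1 // => i _; rewrite /UG coef_poly aN a0.
rewrite hornerZ faE big_mkord /cG mulr_sumr; apply: eq_bigr => i _.
by rewrite /UG coef_poly aN; case: eqP => // _; rewrite exprNn.
Qed.

Lemma gH_H0 j : gH 0 j = 1.
Proof.
rewrite /gH coef0_prod big1 // => i _.
by rewrite coefB coefC coefZ coefX mulr0 subr0.
Qed.

Lemma gH_Hg0 m : gH m 0 = (m == 0%N)%:R.
Proof. by rewrite /gH big_geq // coef1. Qed.

Lemma gH_HN j m : (0 < m)%N -> (m <= Nt)%N ->
  gH m j *+ m = \sum_(a < m.+1) (Sg cH a).[j%:R] * gH (m - a)%N j.
Proof.
move=> m0 mN.
have := prod_newton (index_iota 1 j) (@newton_H Nt) mN.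
rewrite coefXD // /gH => ->; rewrite coefM; apply: eq_bigr => a _.
congr (_ * _); rewrite coef_sum /Sg.
have aN : (a < Nt.+1)%N by rewrite ltnS (leq_trans _ mN) // -ltnS.
case: eqP => [a0|a0].
  by rewrite horner0 big1 // => i _; rewrite /UH coef_poly aN a0.
rewrite hornerZ faE /cH mulN1r -sum_pow_shift; last by rewrite lt0n; apply/eqP.
rewrite -sumrN.
by apply: eq_bigr => i _; rewrite /UH coef_poly aN; case: eqP.
Qed.

End GH.

Lemma map_trunc_inv (R S : comNzRingType) (f : {rmorphism R -> S}) N (p : {poly R}) :
  map_poly f (trunc_inv N p) = trunc_inv N (map_poly f p).
Proof.
rewrite /trunc_inv rmorph_sum; apply: eq_bigr => k _.
by rewrite rmorphXn rmorphB rmorph1.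
Qed.

Lemma trunc_inv1 (R : comNzRingType) N : trunc_inv N (1 : {poly R}) = 1.
Proof.
rewrite /trunc_inv subrr big_ord_recl expr0 big1 ?addr0 // => i _.
by rewrite expr0n.
Qed.

Section Bridge.
Variable n : nat.
Local Notation Rn := {mpoly rat[n.-1.+1]}.
Local Notation ev := (mcoeff 0%MM : Rn -> rat).

Lemma ev_X (i : 'I_n.-1.+1) : ev 'X_i = 0.
Proof. by rewrite mcoeffX mnm1_eq0. Qed.

Lemma map_aser : map_poly ev (aser n) = 0.
Proof.
rewrite /aser rmorph_sum big1 // => i _.
by rewrite rmorphM /= map_polyC /= ev_X mul0r.
Qed.

Lemma map_1a : map_poly ev (1 + aser n * 'X^2) = 1.
Proof. by rewrite rmorphD rmorph1 rmorphM /= map_aser mul0r addr0. Qed.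

Lemma map_G j : map_poly ev (Gser n j) = \prod_(i < j) TG n.+1 i.
Proof.
rewrite /Gser rmorph_prod; apply: eq_bigr => i _.
rewrite rmorphM /= map_1a mul1r.
by rewrite map_trunc_inv rmorphD rmorph1 /= map_polyZ map_polyX rmorph_nat TG_E.
Qed.

Lemma map_H j : map_poly ev (Hser n j) = \prod_(1 <= k < j) (1 - (k%:R : rat) *: 'X).
Proof.
rewrite /Hser rmorph_prod; apply: eq_bigr => i _.
rewrite rmorphM /= map_trunc_inv map_1a trunc_inv1 mulr1.
by rewrite rmorphB rmorph1 /= map_polyZ map_polyX rmorph_nat.
Qed.

Lemma bridge (S : nat -> {mpoly rat[n.-1]}) : S_spec S -> forall j, (0 < j)%N ->
  gG n.+1 n.+1 j - gH n.+1 j =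
  (j.*2.-1)%:R * (const_term (S 0%N) + \sum_(1 <= i < n.+1)
       const_term (S i) * ((j * j.-1)%:R) ^+ i).
Proof.
move=> HS j j0; rewrite /gG /gH -coefB; have := congr1 ev (HS j j0).
rewrite /lhs_coef -coef_map rmorphM rmorphB rmorphD rmorph1 rmorphM /= map_aser.
rewrite mul0r addr0 mulr1 map_G map_H => ->.
have ew : forall p : {mpoly rat[n.-1]}, (mwiden p)@_0 = const_term p.
  by move=> p; rewrite /const_term -mnmwiden0 mwiden_mnmwiden.
rewrite rmorphM rmorph_nat !rmorphD /= mcoeffX mnm1_eq0 add0r ew.
congr (_ * (_ + _)); rewrite (rmorph_sum (mcoeff 0%MM : Rn -> rat)) /=.
apply: eq_bigr => i _; rewrite rmorphM /= ew rmorphXn /=.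
by rewrite (rmorph_nat (mcoeff 0%MM : Rn -> rat)).
Qed.

End Bridge.

Lemma bb1 : bb 1 = - 2%:R^-1.
Proof. by rewrite bbE bernoulliS big_ord1 /= mul1r. Qed.

Section Final.
Variable N : nat.
Hypothesis N0 : (0 < N)%N.
Variables PG PH : nat -> {poly rat}.
Hypothesis HPG : forall m, (m <= N)%N -> forall j : nat, (PG m).[j%:R] = gG N m j.
Hypothesis HPH : forall m, (m <= N)%N -> forall j : nat, (PH m).[j%:R] = gH m j.

Lemma PG1 m : (0 < m)%N -> (m <= N)%N -> (PG m)`_1 = cG m * bb m / m%:R.
Proof.
move=> m0 mN; rewrite -(P_coef1 (@gG_Hg0 N) (@gG_HN N) HPG) //. rewrite -[X in X / _]mulr_natr mulfK //.
by rewrite pnatr_eq0 -lt0n.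
Qed.

Lemma PH1 m : (0 < m)%N -> (m <= N)%N -> (PH m)`_1 = cH m * bb m / m%:R.
Proof.
move=> m0 mN; rewrite -(P_coef1 (@gH_Hg0) (@gH_HN N) HPH) // -[X in X / _]mulr_natr mulfK //.
by rewrite pnatr_eq0 -lt0n.
Qed.

Lemma diff0 : (PG N - PH N)`_0 = 0.
Proof.
by rewrite coefB (P_coef0 (@gG_Hg0 N) HPG) // (P_coef0 (@gH_Hg0) HPH) // subrr.
Qed.

Lemma diff1 : (PG N - PH N)`_1 = (cG N - cH N) * bb N / N%:R.
Proof. by rewrite coefB PG1 // PH1 // -mulrBl -mulrBl. Qed.

Lemma diff2 k : N = (k.*2).+3 ->
  (PG N - PH N)`_2 = bb (k.*2).+2 / ((k.*2).+2)%:R.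
Proof.
move=> eN.
have eG := P_coef2 (@gG_H0 N) (@gG_Hg0 N) (@gG_HN N) HPG N0 (leqnn N).
have eH := P_coef2 (@gH_H0) (@gH_Hg0) (@gH_HN N) HPH N0 (leqnn N).
have oN : odd N by rewrite eN /= odd_double.
have sN : cG N = -1 by rewrite /cG -(signr_odd _ N) oN expr1.
have key : ((PG N)`_2 - (PH N)`_2) *+ N = \sum_(a < N)
    (if nat_of_ord a == 0%N then 0 else - 2%:R * (bb a * bb (N - a)%N / (N - a)%N%:R)).
  rewrite mulrnBl eG eH sN /cH opprD addrACA subrr addr0 -sumrB; apply: eq_bigr => [[a ha]] _ /=.
  case: eqP => [_|a0]; first by rewrite subrr.
  have a1 : (0 < a)%N by rewrite lt0n; apply/eqP.
  have h1 : (0 < N - a)%N by rewrite subn_gt0.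
  rewrite PG1 // ?leq_subr // PH1 // ?leq_subr // /cG /cH.
  rewrite -(signr_odd _ a) -(signr_odd _ (N - a)) oddB ?(ltnW ha) // oN.
  by case: (odd a) => /=; rewrite ?expr1 ?expr0; ring.
rewrite coefB; apply: (@mulIf _ N%:R); first by rewrite pnatr_eq0 -lt0n.
rewrite mulr_natr key {key eG eH}.
rewrite eN big_ord_recr /= big_ord_recl /= big_ord_recl /=.
rewrite big1 ?addr0; last first.
  move=> [a ha] _ /=.
  case: (boolP (odd a)) => oa.
    by rewrite bb_odd ?mul0r ?mulr0 //= oa.
  have h : a.+1 != k.*2.
    by apply/eqP => e; move: (odd_double k); rewrite -e /= (negbTE oa).
  rewrite /bump /= !add1n.
  rewrite [bb (_ - _)]bb_odd; first by rewrite mulr0 mul0r mulr0.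
    by move: ha h; rewrite -!muln2; lia.
  rewrite oddB /=; last by move: ha; rewrite -!muln2; lia.
  by rewrite odd_double (negbTE oa).
have e1 : (k.*2.+3 - (1 + 0) = k.*2.+2)%N by rewrite addn0 subSS subn0.
have e2 : (k.*2.+3 - k.*2.+2 = 1)%N by rewrite !subSS subSn // subnn.
rewrite e1 e2 bb1.
set B := bb _; set K := k.*2.
have -> : K.+3%:R = K%:R + 3%:R :> rat by rewrite -natrD addn3.
have -> : K.+2%:R = K%:R + 2%:R :> rat by rewrite -natrD addn2.
have K0 : K%:R + 2%:R != 0 :> rat by rewrite -natrD pnatr_eq0 addn2.
field; exact: K0.
Qed.

End Final.

Section Rhs.
Variables (d : nat) (c : nat -> rat).

Definition Vp : {poly rat} := 'X * ('X - 1).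
Definition Qp : {poly rat} := (c 0%N)%:P + \sum_(1 <= i < d.+1) c i *: Vp ^+ i.
Definition Rp : {poly rat} := ('X * Qp) *+ 2 - Qp.

Lemma Rp_val (j : nat) : (0 < j)%N ->
  Rp.[j%:R] = (j.*2.-1)%:R * (c 0%N + \sum_(1 <= i < d.+1) c i * ((j * j.-1)%:R) ^+ i).
Proof.
move=> j0; rewrite /Rp /Qp hornerD hornerN hornerMn hornerM hornerX hornerD hornerC.
rewrite horner_sum.
have -> : \sum_(1 <= i < d.+1) (c i *: Vp ^+ i).[j%:R]
   = \sum_(1 <= i < d.+1) c i * ((j * j.-1)%:R) ^+ i.
  apply: eq_bigr => i _; rewrite hornerZ horner_exp /Vp hornerM hornerX hornerD hornerN hornerC.
  by rewrite natrM -(prednK j0) /= hornerX -natr1 addrK.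
set u := c 0%N + _.
have -> : (j.*2.-1)%:R = (j%:R *+ 2 - 1 : rat).
  by apply: (@addIr _ 1); rewrite subrK natr1 prednK ?double_gt0 // -addnn natrD mulr2n.
ring.
Qed.

Lemma Vp_coef i k : (Vp ^+ i)`_k = ((('X - 1) ^+ i)`_(k - i)%N) *+ (i <= k)%N.
Proof.
rewrite /Vp exprMn coefXnM; case: ltnP => h /=.
  by rewrite mulr0n.
by rewrite mulr1n.
Qed.

Lemma Qp_coef0 : Qp`_0 = c 0%N.
Proof.
rewrite /Qp coefD coefC /= coef_sum big_nat_cond big1 ?addr0 // => i /andP [/andP [hi _] _].
by rewrite coefZ Vp_coef leqNgt hi mulr0n mulr0.
Qed.

Lemma Qp_coef1 : (0 < d)%N -> Qp`_1 = - c 1%N.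
Proof.
move=> d0; have h1 : (1 < d.+1)%N by lia.
rewrite /Qp coefD coefC /= add0r coef_sum big_ltn //.
rewrite big_nat_cond big1 ?addr0 => [|i /andP [/andP [hi _] _]].
  by rewrite coefZ Vp_coef /= subnn expr1 coefB coefX coefC /= sub0r mulrN1.
by rewrite coefZ Vp_coef leqNgt hi mulr0n mulr0.
Qed.

Lemma Qp_coef2 : (1 < d)%N -> Qp`_2 = c 1%N + c 2%N.
Proof.
move=> d1; have h1 : (1 < d.+1)%N by lia.
have h2 : (2 < d.+1)%N by lia.
rewrite /Qp coefD coefC /= add0r coef_sum big_ltn // big_ltn //.
rewrite big_nat_cond big1 ?addr0 => [|i /andP [/andP [hi _] _]].
  rewrite !coefZ !Vp_coef /= expr1 coefB coefX coefC /= subr0 mulr1.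
  rewrite subnn mulr1n -horner_coef0 horner_exp !hornerE /=; ring.
by rewrite coefZ Vp_coef leqNgt hi mulr0n mulr0.
Qed.

Lemma Rp_coef0 : Rp`_0 = - c 0%N.
Proof. by rewrite /Rp coefB coefMn coefXM /= mul0rn sub0r Qp_coef0. Qed.

Lemma Rp_coef1 : (0 < d)%N -> Rp`_1 = c 0%N *+ 2 + c 1%N.
Proof. by move=> d0; rewrite /Rp coefB coefMn coefXM /= Qp_coef0 Qp_coef1 // opprK. Qed.

Lemma Rp_coef2 : (1 < d)%N -> Rp`_2 = - (c 1%N *+ 3) - c 2%N.
Proof.
move=> d1; rewrite /Rp coefB coefMn coefXM /= Qp_coef1 ?(ltnW d1) // Qp_coef2 //.
ring.
Qed.

End Rhs.

Unset Implicit Arguments.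
Theorem proposition4p6 (n : nat) (hn : (1 <= n)%N) :
  (forall S : nat -> {mpoly rat[(n.*2).-1]}, S_spec S ->
     const_term (S 1%N) = 0
     /\ const_term (S 2%N) = - bernoulli n.*2 / (n.*2)%:R)
  /\ (forall S : nat -> {mpoly rat[(n.*2).-1.-1]}, S_spec S ->
     const_term (S 1%N) = bernoulli n.*2 / n%:R).
Proof.
case: n hn => [|k] // _; split.
- move=> S HS.
  have br := bridge HS.
  set N := (k.+1.*2).+1 in br.
  have N0 : (0 < N)%N by [].
  have [PG HPG] := lift (@gG_H0 N) (@gG_HN N).
  have [PH HPH] := lift (@gH_H0) (@gH_HN N).
  pose c i := const_term (S i).
  have EF : PG N - PH N = Rp k.+1.*2 c.
    apply: (@poly_eq_from 1) => j hj.
    by rewrite hornerD hornerN HPG // HPH // br // Rp_val.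
  have d0 := diff0 HPG HPH; rewrite EF Rp_coef0 in d0.
  have d1 := diff1 N0 HPG HPH; rewrite EF Rp_coef1 // in d1.
  have d2 := diff2 N0 HPG HPH (k := k) (erefl _); rewrite EF Rp_coef2 // in d2.
  have oN : odd N by rewrite /N /= odd_double.
  have c0 : c 0%N = 0 by rewrite -[c 0%N]opprK d0 oppr0.
  have c1 : c 1%N = 0.
    move: d1; rewrite c0 mul0rn add0r /cG /cH -(signr_odd _ N) oN expr1 subrr.
    by rewrite !mul0r.
  split => //.
  move: d2; rewrite c1 mul0rn oppr0 sub0r => d2.
  have e : const_term (S 2%N) = - (bb k.*2.+2 / k.*2.+2%:R) by rewrite -d2 opprK.
  by rewrite e bbE mulNr doubleS.
- move=> S HS.
  have br := bridge HS.
  have eN : ((k.+1.*2).-1.+1 = k.+1.*2)%N by [].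
  rewrite eN in br.
  set N := k.+1.*2 in br.
  have N0 : (0 < N)%N by [].
  have [PG HPG] := lift (@gG_H0 N) (@gG_HN N).
  have [PH HPH] := lift (@gH_H0) (@gH_HN N).
  pose c i := const_term (S i).
  have EF : PG N - PH N = Rp (k.+1.*2).-1 c.
    apply: (@poly_eq_from 1) => j hj.
    by rewrite hornerD hornerN HPG // HPH // br // Rp_val.
  have d0 := diff0 HPG HPH; rewrite EF Rp_coef0 in d0.
  have d1 := diff1 N0 HPG HPH; rewrite EF Rp_coef1 // in d1.
  have c0 : c 0%N = 0 by rewrite -[c 0%N]opprK d0 oppr0.
  have oN : odd N = false by rewrite /N odd_double.
  move: d1; rewrite c0 mul0rn add0r /cG /cH -(signr_odd _ N) oN expr0 opprK.
  rewrite -/(c 1%N) => ->; rewrite bbE /N -muln2 natrM.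
  field.
  by rewrite addrC natr1 pnatr_eq0.
Qed.
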